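(* For any sequence of groups $(G_n)_{n\in\mathbb N}$, the archipelago group $\mathcal A(G_n)$ has no infinite cyclic quotient; equivalently, $\mathrm{Hom}(\mathcal A(G_n),\mathbb Z)$ is trivial.
   Context: For a sequence of groups $(G_n)_{n\in\mathbb N}$, an infinite word is a map $w:L\to\bigsqcup_n (G_n\setminus\{1\})$ from a countable linearly ordered set $L$ such that $w^{-1}(G_n)$ is finite for every $n$. Two infinite words are equivalent if for every $m$ their restrictions to the letters from $G_1,\dots,G_m$ represent the same element of $G_1*\cdots*G_m$. The topologist's product $\circledast_n G_n$ is the group of equivalence classes, with multiplication induced by concatenation and inversion by reversing the order and inverting each letter. The free product $*_n G_n$ is the subgroup of classes of finite words. The archipelago group is $\mathcal A(G_n):=\circledast_n G_n/\langle\langle *_n G_n\rangle\rangle$ (quotient by the normal closure). *)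

(* Defs.v *)
From Stdlib Require Import List ZArith Lia Sorting.Sorted Relations.Relation_Operators.
Import ListNotations.
Set Implicit Arguments.

Record group := Group {
  gcar : Type;
  gmul : gcar -> gcar -> gcar;
  ginv : gcar -> gcar;
  gone : gcar;
  gmulA : forall x y z, gmul x (gmul y z) = gmul (gmul x y) z;
  gmul1l : forall x, gmul gone x = x;
  gmul1r : forall x, gmul x gone = x;
  gmulVl : forall x, gmul (ginv x) x = gone;
  gmulVr : forall x, gmul x (ginv x) = gone }.

Lemma ginv_ne1 (H : group) (g : gcar H) : g <> gone H -> ginv H g <> gone H.
Proof.
  intros Hg E; apply Hg.
  rewrite <- (gmul1l H g). rewrite <- E at 1. apply gmulVl.
Qed.

Section Archipelago.
Variable G : nat -> group.

Definition letter := { n : nat & gcar (G n) }.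

(** Infinite words: maps from a countable linearly ordered set L to the
    disjoint union of the G_n \ {1}, with finite preimage of each G_n. *)
Record iword := IWord {
  wL : Type;
  wlt : wL -> wL -> Prop;
  wlt_irr : forall x, ~ wlt x x;
  wlt_trans : forall x y z, wlt x y -> wlt y z -> wlt x z;
  wlt_total : forall x y, x = y \/ wlt x y \/ wlt y x;
  wcount : exists f : wL -> nat, forall x y, f x = f y -> x = y;
  wlet : wL -> letter;
  wlet_ne1 : forall x, projT2 (wlet x) <> gone (G (projT1 (wlet x)));
  wfin : forall n, exists ps : list wL, forall x, projT1 (wlet x) = n -> In x ps }.

(** Equality in the free product of the G_n: the congruence on finite words
    generated by deleting an identity letter and merging two adjacent
    letters of the same group. *)
Inductive fstep : list letter -> list letter -> Prop :=
| fs_one u v n : fstep (u ++ existT _ n (gone (G n)) :: v) (u ++ v)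
| fs_mul u v n (a b : gcar (G n)) :
    fstep (u ++ existT _ n a :: existT _ n b :: v) (u ++ existT _ n (gmul _ a b) :: v).

Definition feq : list letter -> list letter -> Prop := clos_refl_sym_trans _ fstep.

Definition listing (w : iword) (m : nat) (ps : list (wL w)) : Prop :=
  NoDup ps /\ Sorted (wlt w) ps /\ (forall x, In x ps <-> projT1 (wlet w x) < m).

(** Equivalence of infinite words (equality in the topologist's product). *)
Definition weqv (w v : iword) : Prop :=
  forall m ps qs, listing w m ps -> listing v m qs ->
    feq (map (wlet w) ps) (map (wlet v) qs).

Definition sum_lt {A B : Type} (ra : A -> A -> Prop) (rb : B -> B -> Prop)
  (x y : A + B) : Prop :=
  match x, y with
  | inl a, inl a' => ra a a'
  | inl _, inr _ => True
  | inr _, inl _ => False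
  | inr b, inr b' => rb b b'
  end.

Definition sum_let (w v : iword) (x : wL w + wL v) : letter :=
  match x with inl a => wlet w a | inr b => wlet v b end.

Lemma sum_lt_irr (w v : iword) x : ~ sum_lt (wlt w) (wlt v) x x.
Proof. destruct x; simpl; [apply wlt_irr | apply wlt_irr]. Qed.

Lemma sum_lt_trans (w v : iword) x y z :
  sum_lt (wlt w) (wlt v) x y -> sum_lt (wlt w) (wlt v) y z -> sum_lt (wlt w) (wlt v) x z.
Proof.
  destruct x, y, z; simpl; try tauto; apply wlt_trans.
Qed.

Lemma sum_lt_total (w v : iword) x y :
  x = y \/ sum_lt (wlt w) (wlt v) x y \/ sum_lt (wlt w) (wlt v) y x.
Proof.
  destruct x as [a|b], y as [a'|b']; simpl; auto.
  - destruct (wlt_total w a a') as [->|[H|H]]; auto.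
  - destruct (wlt_total v b b') as [->|[H|H]]; auto.
Qed.

Lemma sum_count (w v : iword) :
  exists f : wL w + wL v -> nat, forall x y, f x = f y -> x = y.
Proof.
  destruct (wcount w) as [f Hf], (wcount v) as [g Hg].
  exists (fun x => match x with inl a => 2 * f a | inr b => S (2 * g b) end).
  intros [a|b] [a'|b'] E; try lia.
  - rewrite (Hf a a'); auto; lia.
  - rewrite (Hg b b'); auto; lia.
Qed.

Lemma sum_let_ne1 (w v : iword) x :
  projT2 (sum_let w v x) <> gone (G (projT1 (sum_let w v x))).
Proof. destruct x; simpl; apply wlet_ne1. Qed.

Lemma sum_fin (w v : iword) n :
  exists ps : list (wL w + wL v), forall x, projT1 (sum_let w v x) = n -> In x ps.
Proof.
  destruct (wfin w n) as [p Hp], (wfin v n) as [q Hq].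
  exists (map inl p ++ map inr q). intros [a|b] H; apply in_or_app; simpl in H.
  - left; apply in_map; auto.
  - right; apply in_map; auto.
Qed.

Definition wmul (w v : iword) : iword :=
  @IWord (wL w + wL v) (sum_lt (wlt w) (wlt v))
    (@sum_lt_irr w v) (@sum_lt_trans w v) (@sum_lt_total w v) (sum_count w v)
    (sum_let w v) (@sum_let_ne1 w v) (@sum_fin w v).

Definition inv_let (w : iword) (x : wL w) : letter :=
  existT _ (projT1 (wlet w x)) (ginv _ (projT2 (wlet w x))).

Lemma inv_let_ne1 (w : iword) x :
  projT2 (inv_let w x) <> gone (G (projT1 (inv_let w x))).
Proof. simpl; apply ginv_ne1, wlet_ne1. Qed.

Lemma inv_fin (w : iword) n :
  exists ps : list (wL w), forall x, projT1 (inv_let w x) = n -> In x ps.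
Proof. apply (wfin w n). Qed.

Definition winv (w : iword) : iword :=
  @IWord (wL w) (fun x y => wlt w y x)
    (fun x => wlt_irr w x) (fun x y z H1 H2 => wlt_trans w z y x H2 H1)
    (fun x y => match wlt_total w x y with
                | or_introl e => or_introl e
                | or_intror (or_introl h) => or_intror (or_intror h)
                | or_intror (or_intror h) => or_intror (or_introl h)
                end)
    (wcount w) (inv_let w) (@inv_let_ne1 w) (@inv_fin w).

Definition finite_word (w : iword) : Prop :=
  exists ps : list (wL w), forall x, In x ps.

(** The normal closure of the free product inside the topologist's product. *)
Inductive NC : iword -> Prop :=
| nc_fin w : finite_word w -> NC w
| nc_eqv w v : weqv w v -> NC w -> NC v
| nc_mul w v : NC w -> NC v -> NC (wmul w v)
| nc_inv w : NC w -> NC (winv w)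
| nc_conj g w : NC w -> NC (wmul (wmul g w) (winv g)).

(** Equality in the archipelago group A(G_n) = (topologist's product) / NC. *)
Definition arch_eq (w v : iword) : Prop := NC (wmul w (winv v)).

End Archipelago.

(* Main.v *)
Require Import Defs.
From Stdlib Require Import List ZArith Lia Sorting.Sorted Relations.Relation_Operators Cantor ProofIrrelevance Classical FinFun.
Import ListNotations.
Set Implicit Arguments.

Lemma ss_uniq {A} (R : A -> A -> Prop) (irr : forall x, ~ R x x)
  (tr : forall x y z, R x y -> R y z -> R x z) :
  forall l1 l2, StronglySorted R l1 -> StronglySorted R l2 ->
  (forall x, In x l1 <-> In x l2) -> l1 = l2.
Proof.
  induction l1 as [|a l1 IH]; intros [|b l2] H1 H2 He.
  - reflexivity.
  - exfalso; apply (proj2 (He b)); simpl; auto.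
  - exfalso; apply (proj1 (He a)); simpl; auto.
  - apply StronglySorted_inv in H1 as [H1 F1].
    apply StronglySorted_inv in H2 as [H2 F2].
    assert (a = b).
    { destruct (proj1 (He a) (or_introl eq_refl)) as [e|Ha]; [auto|].
      exfalso. pose proof (proj1 (Forall_forall _ _) F2 a Ha) as Rba.
      destruct (proj2 (He b) (or_introl eq_refl)) as [e|Hb].
      + subst; exact (irr _ Rba).
      + pose proof (proj1 (Forall_forall _ _) F1 b Hb) as Rab.
        exact (irr _ (tr _ _ _ Rab Rba)). }
    subst b. f_equal. apply IH; auto.
    intros x; split; intros Hx.
    + destruct (proj1 (He x) (or_intror Hx)) as [e|h]; auto.
      subst; exfalso; exact (irr _ (proj1 (Forall_forall _ _) F1 _ Hx)).
    + destruct (proj2 (He x) (or_intror Hx)) as [e|h]; auto.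
      subst; exfalso; exact (irr _ (proj1 (Forall_forall _ _) F2 _ Hx)).
Qed.

Lemma ss_app {A} (R : A -> A -> Prop) l1 l2 :
  StronglySorted R l1 -> StronglySorted R l2 ->
  (forall x y, In x l1 -> In y l2 -> R x y) -> StronglySorted R (l1 ++ l2).
Proof.
  induction l1 as [|a l1 IH]; simpl; intros H1 H2 H; auto.
  apply StronglySorted_inv in H1 as [H1 F1].
  constructor. apply IH; auto.
  apply Forall_app; split; auto.
  apply Forall_forall; intros; apply H; auto.
Qed.

Lemma ss_rev {A} (R : A -> A -> Prop) l :
  StronglySorted (fun x y => R y x) l -> StronglySorted R (rev l).
Proof.
  induction l as [|a l IH]; simpl; intros H; [constructor|].
  apply StronglySorted_inv in H as [H F].
  apply ss_app; auto. repeat constructor.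
  intros x y Hx [<-|[]]. apply in_rev in Hx.
  exact (proj1 (Forall_forall _ _) F x Hx).
Qed.

Lemma ss_map {A B} (R : A -> A -> Prop) (S : B -> B -> Prop) (f : A -> B) :
  (forall x y, R x y -> S (f x) (f y)) -> forall l,
  StronglySorted R l -> StronglySorted S (map f l).
Proof.
  intros Hf; induction l as [|a l IH]; simpl; intros H; [constructor|].
  apply StronglySorted_inv in H as [H F]. constructor; auto.
  apply Forall_map. eapply Forall_impl; [|exact F]. auto.
Qed.

Fixpoint lefts {A B} (l : list (A + B)) : list A :=
  match l with [] => [] | inl a :: r => a :: lefts r | inr _ :: r => lefts r end.
Fixpoint rights {A B} (l : list (A + B)) : list B :=
  match l with [] => [] | inl _ :: r => rights r | inr b :: r => b :: rights r end.

Lemma in_lefts {A B} (l : list (A + B)) a : In a (lefts l) <-> In (inl a) l.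
Proof.
  induction l as [|[x|x] l IH]; simpl; [tauto| |].
  - split; intros [H|H]; try (left; congruence); right; apply IH; auto.
  - split; [intros H; right; apply IH; auto|intros [H|H]; [discriminate|apply IH; auto]].
Qed.
Lemma in_rights {A B} (l : list (A + B)) a : In a (rights l) <-> In (inr a) l.
Proof.
  induction l as [|[x|x] l IH]; simpl; [tauto| |].
  - split; [intros H; right; apply IH; auto|intros [H|H]; [discriminate|apply IH; auto]].
  - split; intros [H|H]; try (left; congruence); right; apply IH; auto.
Qed.

Lemma nodup_lefts {A B} (l : list (A + B)) : NoDup l -> NoDup (lefts l).
Proof.
  induction l as [|[x|x] l IH]; simpl; intros H; [constructor| |];
  inversion H; subst; auto. constructor; auto. rewrite in_lefts; auto.
Qed.
Lemma nodup_rights {A B} (l : list (A + B)) : NoDup l -> NoDup (rights l).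
Proof.
  induction l as [|[x|x] l IH]; simpl; intros H; [constructor| |];
  inversion H; subst; auto. constructor; auto. rewrite in_rights; auto.
Qed.

Lemma ss_lefts {A B} ra rb (l : list (A + B)) :
  StronglySorted (sum_lt ra rb) l -> StronglySorted ra (lefts l).
Proof.
  induction l as [|[x|x] l IH]; simpl; intros H; [constructor| |];
  apply StronglySorted_inv in H as [H F]; auto.
  constructor; auto. apply Forall_forall; intros y Hy.
  apply in_lefts in Hy. exact (proj1 (Forall_forall _ _) F _ Hy).
Qed.
Lemma ss_rights {A B} ra rb (l : list (A + B)) :
  StronglySorted (sum_lt ra rb) l -> StronglySorted rb (rights l).
Proof.
  induction l as [|[x|x] l IH]; simpl; intros H; [constructor| |];
  apply StronglySorted_inv in H as [H F]; auto.
  constructor; auto. apply Forall_forall; intros y Hy.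
  apply in_rights in Hy. exact (proj1 (Forall_forall _ _) F _ Hy).
Qed.

Lemma all_inr {A B} (l : list (A + B)) :
  Forall (fun z => exists b, z = inr b) l -> lefts l = [] /\ l = map inr (rights l).
Proof.
  induction l as [|[x|x] l IH]; simpl; intros H; auto.
  - inversion H as [|? ? [b Hb]]; discriminate.
  - inversion H; subst. destruct (IH H3) as [E1 E2]. split; auto. f_equal; auto.
Qed.

Lemma decomp {A B} ra rb (l : list (A + B)) :
  StronglySorted (sum_lt ra rb) l -> l = map inl (lefts l) ++ map inr (rights l).
Proof.
  induction l as [|[x|x] l IH]; simpl; intros H; auto;
  apply StronglySorted_inv in H as [H F].
  - rewrite <- IH; auto.
  - assert (Forall (fun z => exists b, z = inr b) l) as Hf.
    { eapply Forall_impl; [|exact F]. intros [a|b] h; simpl in h; [contradiction|eauto]. }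
    destruct (all_inr Hf) as [E1 E2]. rewrite E1. simpl. f_equal; auto.
Qed.
Lemma inv_uniq (H : group) (x y : gcar H) : gmul H y x = gone H -> x = ginv H y.
Proof.
  intros E. rewrite <- (gmul1l H x), <- (gmulVl H y), <- gmulA, E, gmul1r. reflexivity.
Qed.
Lemma ginv_one (H : group) : ginv H (gone H) = gone H.
Proof. symmetry; apply inv_uniq, gmul1l. Qed.
Lemma ginv_mul (H : group) (a b : gcar H) : ginv H (gmul H a b) = gmul H (ginv H b) (ginv H a).
Proof.
  symmetry; apply inv_uniq.
  rewrite <- gmulA, (gmulA H b), gmulVr, gmul1l, gmulVr. reflexivity.
Qed.

Definition linv {G : nat -> group} (x : letter G) : letter G :=
  existT _ (projT1 x) (ginv _ (projT2 x)).
Definition finv {G : nat -> group} (l : list (letter G)) := rev (map linv l).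

Lemma fstep_app_l {G} (a l l' : list (letter G)) : fstep l l' -> fstep (a ++ l) (a ++ l').
Proof.
  intros H; destruct H; rewrite !app_assoc; constructor.
Qed.
Lemma fstep_app_r {G} (b l l' : list (letter G)) : fstep l l' -> fstep (l ++ b) (l' ++ b).
Proof.
  intros H; destruct H; rewrite <- !app_assoc; simpl; constructor.
Qed.
Lemma feq_app_l {G} (a l l' : list (letter G)) : feq l l' -> feq (a ++ l) (a ++ l').
Proof.
  induction 1.
  - apply rst_step, fstep_app_l; auto.
  - apply rst_refl.
  - apply rst_sym; auto.
  - eapply rst_trans; eauto.
Qed.
Lemma feq_app_r {G} (b l l' : list (letter G)) : feq l l' -> feq (l ++ b) (l' ++ b).
Proof.
  induction 1.
  - apply rst_step, fstep_app_r; auto.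
  - apply rst_refl.
  - apply rst_sym; auto.
  - eapply rst_trans; eauto.
Qed.

Lemma feq_cancel {G} (l : list (letter G)) : feq (l ++ finv l) [].
Proof.
  induction l as [|x l IH]; simpl; [apply rst_refl|].
  unfold finv; simpl. fold (finv l). rewrite app_assoc.
  change (feq ([x] ++ (l ++ finv l) ++ [linv x]) []).
  eapply rst_trans. { apply feq_app_l, feq_app_r, IH. }
  simpl. destruct x as [n g]. unfold linv; simpl.
  eapply rst_trans.
  { apply rst_step. apply (fs_mul G [] [] n g (ginv _ g)). }
  simpl. rewrite gmulVr. apply rst_step. apply (fs_one G [] [] n).
Qed.
Definition Hom (G : nat -> group) (phi : iword G -> Z) :=
  (forall w v, arch_eq w v -> phi w = phi v) /\
  (forall w v, phi (wmul w v) = (phi w + phi v)%Z).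

Definition idx {G} {w : iword G} (x : wL w) : nat := projT1 (wlet w x).

Definition Ew (G : nat -> group) : iword G.
Proof.
  refine (@IWord G Empty_set (fun _ _ => False) _ _ _ _ (fun x => match x with end) _ _).
  - tauto.
  - tauto.
  - intros [].
  - exists (fun _ => 0). intros [].
  - intros [].
  - intros n; exists []; intros [].
Defined.

Lemma listing_ss {G} (w : iword G) m ps : listing w m ps -> StronglySorted (wlt w) ps.
Proof.
  intros [_ [H _]]. apply Sorted_StronglySorted; auto.
  intros x y z; apply wlt_trans.
Qed.

Lemma listing_uniq {G} (w : iword G) m ps qs : listing w m ps -> listing w m qs -> ps = qs.
Proof.
  intros H1 H2. apply (@ss_uniq _ (wlt w)).
  - apply wlt_irr.
  - apply wlt_trans.
  - eapply listing_ss; eauto.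
  - eapply listing_ss; eauto.
  - intros x. destruct H1 as [_ [_ H1]], H2 as [_ [_ H2]]. rewrite H1, H2; tauto.
Qed.

Lemma phi_weqv {G} (phi : iword G -> Z) (Hp : Hom phi) (v u : iword G) :
  weqv v u -> phi v = phi u.
Proof.
  intros Hw. apply (proj1 Hp). unfold arch_eq.
  apply nc_eqv with (w := Ew G).
  2:{ apply nc_fin. exists []. intros []. }
  intros m ps rs Hps Hrs.
  destruct ps as [|[]]. simpl.
  pose proof (listing_ss Hrs) as Hss.
  rewrite (decomp Hss). rewrite map_app, !map_map. simpl.
  set (A := lefts rs). set (B := rights rs).
  assert (LA : listing v m A).
  { destruct Hrs as [Hn [_ Hi]]. split; [|split].
    - apply nodup_lefts; auto.
    - apply StronglySorted_Sorted. apply (ss_lefts (ra := wlt v) (rb := wlt (winv u)) (l := rs) Hss).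
    - intros x. unfold A. rewrite in_lefts, Hi. simpl. tauto. }
  assert (LB : listing u m (rev B)).
  { destruct Hrs as [Hn [_ Hi]]. split; [|split].
    - apply NoDup_rev, nodup_rights; auto.
    - apply StronglySorted_Sorted. apply ss_rev. apply (ss_rights (ra := wlt v) (rb := wlt (winv u)) (l := rs) Hss).
    - intros x. rewrite <- in_rev. unfold B. rewrite in_rights, Hi. simpl. tauto. }
  specialize (Hw m A (rev B) LA LB).
  assert (E : map (fun x => inv_let u x) B = finv (map (wlet u) (rev B))).
  { unfold finv. rewrite map_map, map_rev, rev_involutive. reflexivity. }
  change (feq [] (map (wlet v) A ++ map (fun x => inv_let u x) B)). rewrite E. apply rst_sym.
  eapply rst_trans. { apply feq_app_r. exact Hw. }
  apply feq_cancel.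
Qed.

Lemma phi_fin {G} (phi : iword G -> Z) (Hp : Hom phi) (w : iword G) :
  finite_word w -> phi w = 0%Z.
Proof.
  assert (K : forall v : iword G, finite_word v -> phi v = phi (Ew G)).
  { intros v [ps Hps]. apply (proj1 Hp). unfold arch_eq. apply nc_fin.
    exists (map inl ps). intros [a|[]]. apply in_map, Hps. }
  intros Hw. rewrite (K w Hw).
  assert (E : phi (wmul (Ew G) (Ew G)) = phi (Ew G)).
  { apply K. exists []. intros [[]|[]]. }
  rewrite (proj2 Hp) in E. lia.
Qed.

Lemma phi_iso {G} (phi : iword G -> Z) (Hp : Hom phi) (v u : iword G) (f : wL v -> wL u) :
  (forall x y, f x = f y -> x = y) -> (forall y, exists x, f x = y) ->
  (forall x y, wlt v x y -> wlt u (f x) (f y)) -> (forall x, wlet u (f x) = wlet v x) ->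
  phi v = phi u.
Proof.
  intros Hi Hs Ho Hl. apply (phi_weqv Hp).
  intros m ps qs Hps Hqs.
  assert (L : listing u m (map f ps)).
  { destruct Hps as [Hn [Hso Hm]]. split; [|split].
    - apply FinFun.Injective_map_NoDup; auto.
    - apply StronglySorted_Sorted. apply ss_map with (R := wlt v); auto.
      apply Sorted_StronglySorted; auto. intros x y z; apply wlt_trans.
    - intros y. destruct (Hs y) as [x <-]. rewrite Hl, <- Hm. split.
      + intros H. apply in_map_iff in H as [x' [E H]]. apply Hi in E; subst; auto.
      + apply in_map. }
  rewrite (listing_uniq Hqs L), map_map.
  replace (map (fun x => wlet u (f x)) ps) with (map (wlet v) ps).
  - apply rst_refl.
  - apply map_ext; intros; rewrite Hl; auto.
Qed.

Lemma sub_list {T : Type} (C : T -> Prop) (R : {p | C p} -> Prop) (l : list T) :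
  (forall p, R p -> In (proj1_sig p) l) -> exists ps : list {p | C p}, forall p, R p -> In p ps.
Proof.
  revert R; induction l as [|a l IH]; intros R H.
  - exists []. intros p Hp; apply (H p Hp).
  - destruct (IH (fun p => R p /\ proj1_sig p <> a)) as [ps Hps].
    { intros p [Hp Hn]. destruct (H p Hp); [congruence|auto]. }
    destruct (classic (C a)) as [Ca|nCa].
    + exists (exist _ a Ca :: ps). intros [p cp] Hp.
      destruct (classic (p = a)) as [->|ne].
      * left. apply subset_eq_compat; auto.
      * right. apply Hps; auto.
    + exists ps. intros [p cp] Hp. apply Hps; split; auto. simpl; intros ->; contradiction.
Qed.

Lemma sig_eq {T} (C : T -> Prop) (a b : {p | C p}) : proj1_sig a = proj1_sig b -> a = b.
Proof. destruct a, b; simpl; intros; apply subset_eq_compat; auto. Qed.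

Definition restr {G} (u : iword G) (P : wL u -> Prop) : iword G.
Proof.
  refine (@IWord G {x | P x} (fun a b => wlt u (proj1_sig a) (proj1_sig b)) _ _ _ _
            (fun a => wlet u (proj1_sig a)) _ _).
  - intros a; apply wlt_irr.
  - intros a b c; apply wlt_trans.
  - intros a b. destruct (wlt_total u (proj1_sig a) (proj1_sig b)) as [e|h]; auto.
    left; apply sig_eq; auto.
  - destruct (wcount u) as [f Hf]. exists (fun a => f (proj1_sig a)).
    intros a b e; apply sig_eq; auto.
  - intros a; apply wlet_ne1.
  - intros n. destruct (wfin u n) as [l Hl].
    apply (@sub_list _ P (fun a => projT1 (wlet u (proj1_sig a)) = n) l).
    intros p Hp; apply Hl; auto.
Defined.

Lemma phi_restr_T {G} (phi : iword G -> Z) (Hp : Hom phi) (u : iword G) (P : wL u -> Prop) :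
  (forall x, P x) -> phi (restr u P) = phi u.
Proof.
  intros HP. apply (phi_iso Hp) with (f := fun a => proj1_sig a); simpl; auto.
  - intros; apply sig_eq; auto.
  - intros y; exists (exist _ y (HP y)); auto.
Qed.

Lemma phi_restr_ext {G} (phi : iword G -> Z) (Hp : Hom phi) (u : iword G) (P Q : wL u -> Prop) :
  (forall x, P x <-> Q x) -> phi (restr u P) = phi (restr u Q).
Proof.
  intros HP.
  apply (phi_iso Hp) with (f := fun a : {x | P x} => exist Q (proj1_sig a) (proj1 (HP _) (proj2_sig a)) : wL (restr u Q));
   simpl; auto.
  - intros a b e; apply sig_eq. apply (f_equal (@proj1_sig _ _)) in e; auto.
  - intros [y q]; exists (exist _ y (proj2 (HP y) q)); apply sig_eq; auto.
Qed.

Lemma phi_split {G} (phi : iword G -> Z) (Hp : Hom phi) (u : iword G) (P Q R : wL u -> Prop) :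
  (forall x, P x <-> Q x \/ R x) -> (forall x y, Q x -> R y -> wlt u x y) ->
  phi (restr u P) = (phi (restr u Q) + phi (restr u R))%Z.
Proof.
  intros HP Ho. rewrite <- (proj2 Hp). symmetry.
  pose (f := fun s : wL (wmul (restr u Q) (restr u R)) =>
    match s return wL (restr u P) with
    | inl a => exist P (proj1_sig a) (proj2 (HP _) (or_introl (proj2_sig a)))
    | inr b => exist P (proj1_sig b) (proj2 (HP _) (or_intror (proj2_sig b)))
    end).
  apply (phi_iso Hp) with (f := f).
  - intros [[a qa]|[a ra]] [[b qb]|[b rb]]; simpl; intros e;
      apply (f_equal (@proj1_sig _ _)) in e; simpl in e; subst.
    + f_equal; apply sig_eq; auto.
    + exfalso; exact (wlt_irr u _ (Ho _ _ qa rb)).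
    + exfalso; exact (wlt_irr u _ (Ho _ _ qb ra)).
    + f_equal; apply sig_eq; auto.
  - intros [y py]. destruct (proj1 (HP y) py) as [q|r].
    + exists (inl (exist _ y q)); apply sig_eq; auto.
    + exists (inr (exist _ y r)); apply sig_eq; auto.
  - intros [[a qa]|[a ra]] [[b qb]|[b rb]]; simpl; auto; tauto.
  - intros [[a qa]|[a ra]]; reflexivity.
Qed.

Lemma phi_single {G} (phi : iword G -> Z) (Hp : Hom phi) (u : iword G) (y : wL u) :
  phi (restr u (fun x => x = y)) = 0%Z.
Proof.
  apply (phi_fin Hp). exists [exist (fun x => x = y) y eq_refl]. intros a; left; apply sig_eq.
  destruct a; simpl; auto.
Qed.

Lemma phi_cofinite {G} (phi : iword G -> Z) (Hp : Hom phi) (u : iword G) :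
  forall l (P : wL u -> Prop), (forall x, ~ P x -> In x l) -> phi (restr u P) = phi u.
Proof.
  induction l as [|y l IH]; intros P HP.
  - apply (phi_restr_T Hp). intros x; apply NNPP; intros H; exact (HP x H).
  - rewrite <- (IH (fun x => P x \/ x = y)).
    2:{ intros x H. destruct (HP x ltac:(tauto)) as [e|h]; [subst; tauto|auto]. }
    destruct (classic (P y)) as [Py|nPy].
    + apply (phi_restr_ext Hp). intros x; split; auto. intros [h| ->]; auto.
    + rewrite (phi_split Hp u (fun x => P x \/ x = y) (fun x => P x /\ wlt u x y)
                  (fun x => x = y \/ (P x /\ wlt u y x))).
      2:{ intros x; split.
          - intros [Px| ->]; auto.
            destruct (wlt_total u x y) as [->|[h|h]]; tauto.
          - intros [[h _]|[h|[h _]]]; auto. }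
      2:{ intros x z [_ h] [->|[_ h']]; auto. eapply wlt_trans; eauto. }
      rewrite (phi_split Hp u (fun x => x = y \/ (P x /\ wlt u y x)) (fun x => x = y)
                  (fun x => P x /\ wlt u y x)).
      2:{ tauto. }
      2:{ intros x z -> [_ h]; auto. }
      rewrite (phi_single Hp).
      rewrite (phi_split Hp u P (fun x => P x /\ wlt u x y) (fun x => P x /\ wlt u y x)).
      2:{ intros x; split; [|tauto]. intros Px.
          destruct (wlt_total u x y) as [->|[h|h]]; tauto. }
      2:{ intros x z [_ h] [_ h']. eapply wlt_trans; eauto. }
      lia.
Qed.

Lemma phi_tail {G} (phi : iword G -> Z) (Hp : Hom phi) (w : iword G) k :
  phi (restr w (fun x => k <= idx x)) = phi w.
Proof.
  assert (exists l, forall x : wL w, idx x < k -> In x l) as [l Hl].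
  { induction k as [|k [l Hl]].
    - exists []; intros; lia.
    - destruct (wfin w k) as [l' Hl']. exists (l ++ l'). intros x Hx.
      apply in_or_app. destruct (Nat.eq_dec (idx x) k); [right; apply Hl'; auto|left; apply Hl; lia]. }
  apply (phi_cofinite Hp w l). intros x Hx; apply Hl; lia.
Qed.
Fixpoint lexlt {X} (r : X -> X -> Prop) (l1 : list nat) (x1 : X) (l2 : list nat) (x2 : X) : Prop :=
  match l1, l2 with
  | [], [] => r x1 x2
  | [], _ :: _ => True
  | _ :: _, [] => False
  | i :: l1', j :: l2' => i < j \/ (i = j /\ lexlt r l1' x1 l2' x2)
  end.

Lemma lex_irr {X} (r : X -> X -> Prop) (irr : forall x, ~ r x x) l x : ~ lexlt r l x l x.
Proof. induction l; simpl; [apply irr|]. intros [h|[_ h]]; [lia|auto]. Qed.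

Lemma lex_trans {X} (r : X -> X -> Prop) (tr : forall x y z, r x y -> r y z -> r x z) :
  forall l1 x1 l2 x2 l3 x3, lexlt r l1 x1 l2 x2 -> lexlt r l2 x2 l3 x3 -> lexlt r l1 x1 l3 x3.
Proof.
  induction l1 as [|i l1 IH]; intros x1 [|j l2] x2 [|k l3] x3; simpl; try tauto.
  - apply tr.
  - intros [h|[e h]] [h'|[e' h']]; subst; try (left; lia). right; split; eauto.
Qed.

Lemma lex_total {X} (r : X -> X -> Prop) (tot : forall x y, x = y \/ r x y \/ r y x) :
  forall l1 x1 l2 x2, (l1, x1) = (l2, x2) \/ lexlt r l1 x1 l2 x2 \/ lexlt r l2 x2 l1 x1.
Proof.
  induction l1 as [|i l1 IH]; intros x1 [|j l2] x2; simpl; auto.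
  - destruct (tot x1 x2) as [->|h]; auto.
  - destruct (lt_eq_lt_dec i j) as [[h|<-]|h]; auto.
    destruct (IH x1 l2 x2) as [e|[h|h]]; auto.
    left; injection e; intros; subst; auto.
Qed.

Fixpoint code (l : list nat) : nat :=
  match l with [] => 0 | a :: r => S (Cantor.to_nat (a, code r)) end.
Lemma code_inj l1 l2 : code l1 = code l2 -> l1 = l2.
Proof.
  revert l2; induction l1 as [|a l1 IH]; intros [|b l2]; cbn [code]; try discriminate; auto.
  intros e. apply Nat.succ_inj in e. apply Cantor.to_nat_inj in e. rename e into e'.
  injection e'; intros; subst; f_equal; auto.
Qed.

Fixpoint allL (m n : nat) : list (list nat) :=
  match n with
  | 0 => [[]]
  | S n => [] :: flat_map (fun i => map (cons i) (allL m n)) (seq 0 m)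
  end.
Lemma allL_in m : forall n l, Forall (fun i => i < m) l -> length l <= n -> In l (allL m n).
Proof.
  induction n as [|n IH]; intros [|i l] Hf Hl; simpl in *; auto; try lia.
  right. inversion Hf; subst. apply in_flat_map. exists i; split.
  - apply in_seq; lia.
  - apply in_map, IH; auto; lia.
Qed.

Definition Ycond {G} (w : iword G) (m : nat) (p : list nat * wL w) : Prop :=
  Forall (fun i => i < m) (fst p) /\ length (fst p) <= idx (snd p).

Definition Y0 {G} (w : iword G) (m : nat) : iword G.
Proof.
  refine (@IWord G {p | Ycond w m p}
    (fun a b => lexlt (wlt w) (fst (proj1_sig a)) (snd (proj1_sig a)) (fst (proj1_sig b)) (snd (proj1_sig b)))
    _ _ _ _ (fun a => wlet w (snd (proj1_sig a))) _ _).
  - intros a; apply lex_irr, wlt_irr.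
  - intros a b c; apply lex_trans, wlt_trans.
  - intros a b. destruct (lex_total (wlt w) (wlt_total w) (fst (proj1_sig a)) (snd (proj1_sig a))
                  (fst (proj1_sig b)) (snd (proj1_sig b))) as [e|h]; auto.
    left; apply sig_eq. destruct (proj1_sig a), (proj1_sig b); simpl in *; auto.
  - destruct (wcount w) as [f Hf].
    exists (fun a => code (f (snd (proj1_sig a)) :: fst (proj1_sig a))).
    intros a b e; apply sig_eq. apply code_inj in e. injection e; intros e1 e2.
    apply Hf in e2. destruct (proj1_sig a), (proj1_sig b); simpl in *; subst; auto.
  - intros a; apply wlet_ne1.
  - intros n. destruct (wfin w n) as [xs Hxs].
    apply (@sub_list _ (Ycond w m) (fun a => projT1 (wlet w (snd (proj1_sig a)))= n)
             (list_prod (allL m n) xs)).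
    intros [[l x] [Hf Hl]] Hn; simpl in *. apply in_prod.
    + apply allL_in; auto. unfold idx in Hl; lia.
    + apply Hxs; auto.
Defined.

Definition Yk {G} (w : iword G) (m k : nat) : iword G :=
  restr (Y0 w m) (fun a => k + length (fst (proj1_sig a)) <= idx (snd (proj1_sig a))).

Definition hdlt (j : nat) (l : list nat) : Prop :=
  match l with [] => True | i :: _ => i < j end.
Lemma phi_Yrel {G} (phi : iword G -> Z) (Hp : Hom phi) (w : iword G) m k :
  phi (Yk w m k) = (phi w + Z.of_nat m * phi (Yk w m (S k)))%Z.
Proof.
  pose (Pj := fun j (a : wL (Y0 w m)) =>
    k + length (fst (proj1_sig a)) <= idx (snd (proj1_sig a)) /\ hdlt j (fst (proj1_sig a))).
  assert (E1 : phi (Yk w m k) = phi (restr (Y0 w m) (Pj m))).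
  { apply (phi_restr_ext Hp). intros [[l x] [Hf Hl]]; unfold Pj; simpl.
    split; [|tauto]. intros H; split; auto. destruct l; simpl; auto. inversion Hf; auto. }
  rewrite E1.
  enough (Hj : forall j, j <= m -> phi (restr (Y0 w m) (Pj j)) = (phi w + Z.of_nat j * phi (Yk w m (S k)))%Z) by (apply Hj; auto).
  induction j as [|j IH]; intros Hjm.
  - assert (c0 : forall a : {x : wL w | k <= idx x}, Ycond w m ([], proj1_sig a)).
    { intros a; split; simpl; [constructor|lia]. }
    assert (p0 : forall a, Pj 0 (exist _ ([], proj1_sig a) (c0 a))).
    { intros [x h]; unfold Pj; simpl; split; auto; lia. }
    rewrite <- (phi_tail Hp w k). rewrite Z.add_0_r. symmetry.
    refine (phi_iso Hp (restr w (fun x => k <= idx x)) (restr (Y0 w m) (Pj 0))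
              (fun a => exist _ (exist _ ([], proj1_sig a) (c0 a)) (p0 a)) _ _ _ _).
    + intros a b e. apply (f_equal (@proj1_sig _ _)) in e. apply (f_equal (@proj1_sig _ _)) in e.
      simpl in e. injection e; intros. apply sig_eq; auto.
    + intros [[[l x] c] q]. destruct l as [|i l].
      * assert (h : k <= idx x) by (destruct q as [q _]; simpl in q; lia).
        exists (exist _ x h). apply sig_eq; simpl; apply sig_eq; reflexivity.
      * exfalso; destruct q as [_ q]; simpl in q; lia.
    + intros a b h; simpl; auto.
    + intros a; reflexivity.
  - assert (cj : forall a : wL (Yk w m (S k)), Ycond w m (j :: fst (proj1_sig (proj1_sig a)), snd (proj1_sig (proj1_sig a)))).
    { intros [[[l x] [Hf Hl]] h]; simpl in *. split; simpl; [constructor; auto; lia|lia]. }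
    pose (Dj := fun a : wL (Y0 w m) =>
      k + length (fst (proj1_sig a)) <= idx (snd (proj1_sig a)) /\ exists l', fst (proj1_sig a) = j :: l').
    assert (dj : forall a, Dj (exist _ _ (cj a))).
    { intros [[[l x] [Hf Hl]] h]; unfold Dj; simpl in *. split; [lia|eauto]. }
    rewrite (phi_split Hp (Y0 w m) (Pj (S j)) (Pj j) Dj).
    + rewrite IH by lia.
      assert (phi (restr (Y0 w m) Dj) = phi (Yk w m (S k))) as ->.
      { symmetry.
        refine (phi_iso Hp (Yk w m (S k)) (restr (Y0 w m) Dj)
              (fun a => exist _ (exist _ _ (cj a)) (dj a)) _ _ _ _).
        - intros a b e. apply (f_equal (@proj1_sig _ _)) in e. apply (f_equal (@proj1_sig _ _)) in e.
          destruct a as [[[l x] c] h], b as [[[l' y] c'] h']. simpl in e.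
          injection e; intros; subst. apply sig_eq; simpl; apply sig_eq; reflexivity.
        - intros [[[l x] [Hf Hl]] [q [l' e]]]; simpl in *; subst l.
          inversion Hf; subst.
          assert (c' : Ycond w m (l', x)) by (split; simpl; auto; simpl in Hl; lia).
          assert (h : S k + length (fst (l', x)) <= idx (snd (l', x))) by (simpl in *; lia).
          exists (exist _ (exist _ (l', x) c') h). apply sig_eq; simpl; apply sig_eq; reflexivity.
        - intros a b h; simpl; right; auto.
        - intros a; reflexivity. }
      lia.
    + intros [[l x] c]; unfold Pj, Dj; simpl. destruct l as [|i l]; simpl.
      * split; [tauto|]. intros [h|[h [l' e]]]; [auto|discriminate].
      * split.
        -- intros [h1 h2]. destruct (Nat.eq_dec i j) as [->|ne]; [right; eauto|left; split; auto; lia].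
        -- intros [[h1 h2]|[h1 [l' e]]]; split; auto; try lia. injection e; lia.
    + intros [[l x] c] [[l' y] c']; unfold Pj, Dj; simpl. intros [_ h] [_ [l'' e]]; subst l'.
      destruct l as [|i l]; simpl in *; auto.
Qed.

Theorem proposition7 (G : nat -> group) (phi : iword G -> Z)
  (phi_wd : forall w v, arch_eq w v -> phi w = phi v)
  (phi_hom : forall w v, phi (wmul w v) = (phi w + phi v)%Z) :
  forall w : iword G, phi w = 0%Z.
Proof.
  intros w. assert (Hp : Hom phi) by (split; auto).
  set (a := phi w).
  set (M := (Z.abs a + 2)%Z).
  set (m := Z.to_nat M).
  assert (HM : Z.of_nat m = M) by (unfold m, M; lia).
  set (b := fun k => phi (Yk w m k)).
  assert (Rel : forall k, b k = (a + M * b (S k))%Z).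
  { intros k; unfold b; rewrite (phi_Yrel Hp w m k), HM; reflexivity. }
  set (c := fun k => ((M - 1) * b k + a)%Z).
  assert (Rc : forall k, c k = (M * c (S k))%Z).
  { intros k; unfold c; rewrite (Rel k). ring. }
  assert (Pc : forall k, c 0 = (M ^ Z.of_nat k * c k)%Z).
  { induction k as [|k IH]; [change (Z.of_nat 0) with 0%Z; rewrite Z.pow_0_r; ring|].
    rewrite IH, Rc, Nat2Z.inj_succ, Z.pow_succ_r by lia. ring. }
  assert (c0 : c 0 = 0%Z).
  { destruct (Z.eq_dec (c 0) 0) as [e|ne]; auto. exfalso.
    set (k := Z.to_nat (Z.abs (c 0))).
    pose proof (Pc k) as E.
    pose proof (Z.pow_gt_lin_r M (Z.of_nat k) ltac:(lia) ltac:(lia)) as L.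
    assert (Z.of_nat k = Z.abs (c 0)) as Hk by (unfold k; lia).
    destruct (Z.eq_dec (c k) 0) as [e'|ne'].
    - rewrite e' in E; lia.
    - assert (Z.abs (c O) = M ^ Z.of_nat k * Z.abs (c k))%Z.
      { rewrite E, Z.abs_mul, Z.abs_eq; auto. apply Z.pow_nonneg; lia. }
      nia. }
  unfold c in c0.
  destruct (Z.eq_dec (b 0) 0) as [e|ne].
  - rewrite e in c0; lia.
  - exfalso. assert (Ea : (a = - ((M - 1) * b O))%Z) by lia.
    assert (H : (Z.abs a = Z.abs (M - 1) * Z.abs (b O))%Z) by (rewrite Ea, Z.abs_opp, Z.abs_mul; reflexivity).
    rewrite (Z.abs_eq (M - 1)) in H by (unfold M; lia).
    assert (Z.abs (b O) >= 1)%Z by lia. unfold M in H. nia.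
Qed.
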